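(* Let $Y$ be a random variable whose moment generating function $E[e^{tY}]$ exists for $|t|<r_0$ for some $r_0>0$. Let $(Y_j)_{j\ge1}$ be mutually independent copies of $Y$, $S_0=0$, $S_k=Y_1+\cdots+Y_k$ for $k\ge1$. Let $r$ be a positive integer and define the probabilistic bivariate $r$-Bell polynomials $\phi_{n,r}^Y(x,y)$ by $$\Big(1+y\big(E[e^{Yt}]-1\big)\Big)^{x}e^{rt}=\sum_{n=0}^{\infty}\phi_{n,r}^Y(x,y)\frac{t^n}{n!}.$$ Then for every $n\ge0$, $$\phi_{n,r}^Y(x,y)=\sum_{k=0}^{n}{n+r\brace k+r}_{r,Y}(x)_k\,y^k,$$ where ${n+r\brace k+r}_{r,Y}=\frac{1}{k!}\sum_{j=0}^{k}\binom{k}{j}(-1)^{k-j}E\big[(S_j+r)^n\big]$ for $n\ge k\ge0$.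
   Context: $(x)_0=1$, $(x)_k=x(x-1)\cdots(x-k+1)$ for $k\ge1$. The power $(1+u)^x$ is understood via the binomial series $\sum_{k\ge0}\binom{x}{k}u^k$ and the identity is one of power series in $t$; $x,y$ are variables. The numbers ${n+r\brace k+r}_{r,Y}$ are the probabilistic $r$-Stirling numbers of the second kind associated with $Y$. *)

(* Defs.v *)
From HB Require Import structures.
From mathcomp Require Import all_boot all_order all_algebra.
From mathcomp Require Import all_classical all_reals all_analysis.
Set Implicit Arguments. Unset Strict Implicit. Unset Printing Implicit Defensive.
Import Order.TTheory GRing.Theory Num.Theory.
Local Open Scope classical_set_scope.
Local Open Scope ring_scope.

Definition fps (R : realType) := nat -> R.

Definition fps_one (R : realType) : fps R := fun n => (n == 0%N)%:R.

Definition fps_mul (R : realType) (a b : fps R) : fps R :=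
  fun n => \sum_(i < n.+1) a i * b (n - i)%N.

Definition fps_exp (R : realType) (a : fps R) (k : nat) : fps R :=
  iter k (fps_mul a) (fps_one R).

Definition falling (R : realType) (x : R) (k : nat) : R :=
  \prod_(i < k) (x - i%:R).

Definition binomR (R : realType) (x : R) (k : nat) : R := falling x k / (k`!)%:R.

(* (1+u)^x := sum_{k>=0} binom(x,k) u^k, for a series u with u 0 = 0.
   Since u^k has order >= k, the coefficient of t^n only receives
   contributions from k <= n, so the n-th coefficient is the finite sum below. *)
Definition binom_series (R : realType) (x : R) (u : fps R) : fps R :=
  fun n => \sum_(k < n.+1) binomR x k * fps_exp u k n.

Definition exp_series (R : realType) (c : R) : fps R := fun n => c ^+ n / (n`!)%:R.

(* E[e^{tY}] as a formal power series in t: sum_m E[Y^m] t^m / m! *)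
Definition mgf_series d (T : measurableType d) (R : realType)
  (P : probability T R) (Y : T -> R) : fps R :=
  fun m => fine ('E_P[fun w => (Y w ^+ m)%R])%E / (m`!)%:R.

Definition prob_rBell d (T : measurableType d) (R : realType)
  (P : probability T R) (Y : T -> R) (r : nat) (x y : R) (n : nat) : R :=
  (n`!)%:R *
  fps_mul (binom_series x (fun m => y * (mgf_series P Y m - fps_one R m)))
          (exp_series r%:R) n.

Definition mutually_independent d (T : measurableType d) (R : realType)
  (P : probability T R) (X : nat -> {RV P >-> R}) : Prop :=
  forall (s : seq nat) (B : nat -> set R),
    uniq s -> (forall j, j \in s -> measurable (B j)) ->
    P (\big[setI/setT]_(j <- s) (X j @^-1` B j)) =
    (\prod_(j <- s) P (X j @^-1` B j))%E.

(* probabilistic r-Stirling number of the second kind {n+r brace k+r}_{r,Y},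
   given the copies Ys (S_j = Ys 0 + ... + Ys (j-1)) *)
Definition prob_rStirling2 d (T : measurableType d) (R : realType)
  (P : probability T R) (Ys : nat -> {RV P >-> R}) (r n k : nat) : R :=
  (k`!)%:R^-1 * \sum_(j < k.+1)
     ('C(k, j))%:R * (-1) ^+ (k - j) *
     fine ('E_P[fun w => ((\sum_(i < j) Ys i w + r%:R) ^+ n)%R])%E.

(* Main.v *)
Require Import Defs.
From HB Require Import structures.
From mathcomp Require Import all_boot all_order all_algebra.
From mathcomp Require Import all_classical all_reals all_analysis.
From mathcomp Require Import zify ring lra.
Import Order.TTheory GRing.Theory Num.Theory.
Local Open Scope ring_scope.
Set Implicit Arguments. Unset Strict Implicit.

Section Alg.
Variable R : realType.

Definition agree (N : nat) (a : fps R) (p : {poly R}) :=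
  forall i, (i < N)%N -> a i = p`_i.

Lemma agree_mul N a b p q : agree N a p -> agree N b q ->
  agree N (fps_mul a b) (p * q).
Proof.
move=> ha hb i iN; rewrite /fps_mul coefM; apply: eq_bigr => k _.
have kN : (k < N)%N by have := ltn_ord k; lia.
by rewrite ha // hb //; lia.
Qed.

Lemma agree_one N : agree N (fps_one R) 1.
Proof. by move=> i _; rewrite coef1. Qed.

Lemma agree_exp N a p k : agree N a p -> agree N (fps_exp a k) (p ^+ k).
Proof.
move=> ha; elim: k => [|k IH]; first by rewrite expr0; exact: agree_one.
by rewrite /fps_exp iterS exprS; apply: agree_mul.
Qed.

Lemma coef_exp0 (p : {poly R}) k i : p`_0 = 0 -> (i < k)%N -> (p ^+ k)`_i = 0.
Proof.
move=> p0; elim: k i => [|k IH] i ik //.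
rewrite exprS coefM big1 // => j _.
case: (posnP j) => [->|jp]; first by rewrite p0 mul0r.
by rewrite IH ?mulr0 //; have := ltn_ord j; lia.
Qed.

Lemma agree_poly N (a : fps R) : agree N a (\poly_(i < N) a i).
Proof. by move=> i iN; rewrite coef_poly iN. Qed.

Lemma fact_neq0 k : (k`!)%:R != 0 :> R.
Proof. by rewrite pnatr_eq0 -lt0n fact_gt0. Qed.

Lemma moments_series (c : R) (mu : nat -> R) (e : nat -> nat -> R) :
  (forall n, e 0%N n = c ^+ n) ->
  (forall j n, e j.+1 n = \sum_(k < n.+1) ('C(n, k))%:R * e j (n - k)%N * mu k) ->
  forall N j n, (n < N)%N ->
  e j n = (n`!)%:R * ((\poly_(i < N) (mu i / (i`!)%:R)) ^+ j *
                        \poly_(i < N) (c ^+ i / (i`!)%:R))`_n.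
Proof.
move=> e0 eS N j; elim: j => [|j IH] n nN.
  rewrite expr0 mul1r coef_poly nN e0 mulrC divfK //; exact: fact_neq0.
rewrite exprS -mulrA coefM eS mulr_sumr; apply: eq_bigr => k _.
have kn : (k <= n)%N by have := ltn_ord k; lia.
rewrite (IH (n - k)%N); last by lia.
rewrite coef_poly (_ : (k < N)%N = true); last by apply/idP; lia.
have := bin_fact kn => /(congr1 (fun m => m%:R : R)).
rewrite !natrM => <-.
have h1 := fact_neq0 k; have h2 := fact_neq0 (n - k).
by field; rewrite ?h1 ?h2.
Qed.

Lemma alg_main (c x y : R) (mu : nat -> R) (e : nat -> nat -> R) n :
  mu 0%N = 1 ->
  (forall n, e 0%N n = c ^+ n) ->
  (forall j n, e j.+1 n = \sum_(k < n.+1) ('C(n, k))%:R * e j (n - k)%N * mu k) ->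
  (n`!)%:R * fps_mul (binom_series x
       (fun m => y * (mu m / (m`!)%:R - fps_one R m))) (exp_series c) n =
  \sum_(k < n.+1) ((k`!)%:R^-1 * \sum_(j < k.+1)
     ('C(k, j))%:R * (-1) ^+ (k - j) * e j n) * falling x k * y ^+ k.
Proof.
move=> mu0 e0 eS.
set N := n.+1.
set M := \poly_(i < N) (mu i / (i`!)%:R).
set Er := \poly_(i < N) (c ^+ i / (i`!)%:R).
set U := y *: (M - 1).
have aU : agree N (fun m => y * (mu m / (m`!)%:R - fps_one R m)) U.
  move=> i iN; rewrite /U coefZ coefB coef_poly iN coef1.
  by [].
have U0 : U`_0 = 0.
  by rewrite /U coefZ coefB coef_poly coef1 /= mu0 divr1 subrr mulr0.
set B := \sum_(k < N) binomR x k *: U ^+ k.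
have aB : agree N (binom_series x (fun m => y * (mu m / (m`!)%:R - fps_one R m))) B.
  move=> i iN; rewrite /binom_series /B coef_sum.
  rewrite (big_ord_widen N (fun k => binomR x k * fps_exp _ k i)) //.
  rewrite big_mkcond; apply: eq_bigr => k _; rewrite coefZ.
  case: ifP => ki; first by rewrite (agree_exp k aU).
  by rewrite coef_exp0 ?mulr0 //; lia.
have aE : agree N (exp_series c) Er by move=> i iN; rewrite coef_poly iN.
rewrite (agree_mul aB aE) // /B mulr_suml coef_sum mulr_sumr.
apply: eq_bigr => k _.
rewrite -scalerAl coefZ /U exprZn -scalerAl coefZ.
rewrite addrC exprDn.
rewrite mulr_suml coef_sum mulr_sumr mulr_sumr mulr_sumr.
rewrite mulr_sumr mulr_suml mulr_suml.
apply: eq_bigr => j _.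
rewrite (moments_series e0 eS (N:=N)) //.
rewrite -mulrnAl -2!mulrA.
rewrite (_ : (-1 : {poly R}) ^+ (k - j) *+ 'C(k, j) = ((-1) ^+ (k - j) *+ 'C(k, j))%:P); last first.
  by rewrite rmorphMn rmorphXn rmorphN1.
rewrite -(mulrA _ (M ^+ j)) mul_polyC coefZ /binomR -mulr_natr.
ring.
Qed.

End Alg.

From HB Require Import structures.
From mathcomp Require Import all_boot all_order all_algebra.
From mathcomp Require Import all_classical all_reals all_analysis.
From mathcomp Require Import measurable_realfun finmap.
From mathcomp Require Import zify ring lra.
Import Order.TTheory GRing.Theory Num.Theory.
Import numFieldNormedType.Exports.
Import HBNNSimple.
Local Open Scope classical_set_scope.
Local Open Scope ring_scope.
Set Implicit Arguments. Unset Strict Implicit.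

Section Helpers.
Context d (T : measurableType d) (R : realType) (P : probability T R).
Local Open Scope ereal_scope.

Lemma int_fin_ge0 (f : T -> R) : measurable_fun setT f -> (forall w, 0 <= f w)%R ->
  \int[P]_w (f w)%:E \is a fin_num -> P.-integrable setT (EFin \o f).
Proof.
move=> mf f0 ffin; apply/integrableP; split; first exact/measurable_EFinP.
rewrite (_ : (fun x => `|(EFin \o f) x|) = (fun x => (f x)%:E)); last by apply/funext => x /=; rewrite ger0_norm.
by rewrite -ge0_fin_numE // integral_ge0 // => w _; rewrite lee_fin.
Qed.

Definition Ex (f : T -> R) : R := fine (\int[P]_w (f w)%:E).
Definition Int (f : T -> R) := P.-integrable setT (EFin \o f).

Lemma IntE f : Int f -> \int[P]_w (f w)%:E = (Ex f)%:E.
Proof. by move=> If; rewrite /Ex fineK //; exact: (integrable_fin_num measurableT If). Qed.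

Lemma Int_cst1 : Int (fun _ => 1%R) /\ Ex (fun _ => 1%R) = 1%R.
Proof.
have h : \int[P]_w (1%R)%:E = 1.
  by rewrite (integral_cst P measurableT 1) mul1e; apply: probability_setT.
split; last by rewrite /Ex h.
by apply: int_fin_ge0 => //; rewrite h.
Qed.

Lemma Int_scale k f : Int f -> Int (fun w => k * f w)%R /\ Ex (fun w => k * f w)%R = (k * Ex f)%R.
Proof.
move=> If.
have I' := integrableZl measurableT k If.
split.
  by apply: (eq_integrable measurableT _ _ _ I') => w _ /=; rewrite EFinM.
rewrite /Ex (_ : (fun w => (k * f w)%:E) = (fun w => k%:E * (EFin \o f) w)); last first.
  by apply: funext => w; rewrite EFinM.
by rewrite (integralZl measurableT If) -/(Ex f) IntE.
Qed.

Lemma Int_cst k : Int (fun _ => k) /\ Ex (fun _ => k) = k.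
Proof.
have [I1 E1] := Int_cst1; have [I2 E2] := Int_scale k I1.
by rewrite E1 mulr1 in E2; split; move: I2 E2; rewrite (_ : (fun _ => k * 1)%R = fun _ => k) //;
  apply: funext => w; rewrite mulr1.
Qed.

Lemma Int_add f g : Int f -> Int g ->
  Int (fun w => f w + g w)%R /\ Ex (fun w => f w + g w)%R = (Ex f + Ex g)%R.
Proof.
move=> If Ig.
have I' := integrableD measurableT If Ig.
split.
  by apply: (eq_integrable measurableT _ _ _ I') => w _ /=; rewrite EFinD.
rewrite /Ex (eq_integral (fun w => ((EFin \o f) \+ (EFin \o g)) w)); last first.
  by move=> w _; rewrite /= EFinD.
rewrite (integralD_EFin measurableT If Ig) fineD //.
  exact: (integrable_fin_num measurableT If).
exact: (integrable_fin_num measurableT Ig).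
Qed.

Lemma Int_sum (I : Type) (r : seq I) (F : I -> T -> R) : (forall i, Int (F i)) ->
  Int (fun w => \sum_(i <- r) F i w)%R /\
  Ex (fun w => \sum_(i <- r) F i w)%R = (\sum_(i <- r) Ex (F i))%R.
Proof.
move=> IF; elim: r => [|a r [IH EH]].
  have [I0 E0] := Int_cst 0%R.
  by rewrite big_nil; split; move: I0 E0;
    rewrite (_ : (fun w => \sum_(i <- [::]) F i w)%R = fun _ => 0%R) //;
    apply: funext => w; rewrite big_nil.
have [I1 E1] := Int_add (IF a) IH.
rewrite (_ : (fun w => \sum_(i <- a :: r) F i w)%R = (fun w => F a w + \sum_(i <- r) F i w)%R); last first.
  by apply: funext => w; rewrite big_cons.
by rewrite big_cons E1 EH.
Qed.

End Helpers.

Section Indep.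
Context d (T : measurableType d) (R : realType) (P : probability T R)
  (X : nat -> {RV P >-> R}).
Hypothesis indep : mutually_independent X.
Local Open Scope ereal_scope.

Lemma prod_indic (t : seq nat) (B : nat -> set R) w :
  (\prod_(i <- t) \1_(B i) (X i w) =
   \1_(\big[setI/setT]_(i <- t) X i @^-1` B i) w :> R)%R.
Proof.
elim: t => [|a t IH]; first by rewrite !big_nil indicE in_setT.
by rewrite !big_cons IH indicI /= !indicE.
Qed.

Lemma indep_base (t : seq nat) (B : nat -> set R) : uniq t ->
  (forall i, measurable (B i)) ->
  \int[P]_w (\prod_(i <- t) \1_(B i) (X i w))%:E =
  (\prod_(i <- t) fine (P (X i @^-1` B i)))%:E.
Proof.
move=> ut mB.
under eq_integral => w _ do rewrite prod_indic.
rewrite integral_indic //; last first.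
  by apply: bigsetI_measurable => i _; exact: measurable_funPTI.
rewrite setIT; etransitivity; first by apply: (indep ut) => j _; exact: mB.
rewrite -prodEFin; apply: eq_bigr => i _; rewrite fineK //.
by apply: fin_num_measure; exact: measurable_funPTI.
Qed.


Lemma simple_int (a : nat) (phi : T -> R) (Phi : set R -> R) (g : {nnsfun R >-> R}) :
  measurable_fun setT phi -> (forall w, 0 <= phi w)%R ->
  (forall A, measurable A ->
     \int[P]_w (\1_A (X a w) * phi w)%:E = (Phi A)%:E) ->
  \int[P]_w (g (X a w) * phi w)%:E =
  (\sum_(c <- fset_set (range g)) c * Phi (g @^-1` [set c]))%:E.
Proof.
move=> mphi phi0 hA.
have mA c : measurable (g @^-1` [set c]).
  by rewrite -[_ @^-1` _]setTI; apply: measurable_funP => //.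
have mI c : measurable_fun setT (fun w => \1_(g @^-1` [set c]) (X a w) * phi w)%R.
  apply: measurable_funM => //; apply: measurableT_comp => //.
have hI c : P.-integrable setT
    (EFin \o (fun w => \1_(g @^-1` [set c]) (X a w) * phi w)%R).
  apply: int_fin_ge0 => //; first by move=> w; rewrite mulr_ge0.
  by rewrite hA.
under eq_integral => w _ do
  rewrite (fimfunE g) (fsbig_finite _ _ (fimfunP g)) big_distrl /= -sumEFin.
rewrite (@integral_sum _ _ _ P _ measurableT _
   (fun c w => (c * \1_(g @^-1` [set c]) (X a w) * phi w)%:E)); last first.
  move=> c; apply: (eq_integrable measurableT _ _ _ (integrableZl measurableT c (hI c))) => w _ /=.
  by rewrite -EFinM mulrA.
rewrite -sumEFin; apply: eq_bigr => c _.
rewrite (_ : (fun x => _) = (fun w => c%:E * (\1_(g @^-1` [set c]) (X a w) * phi w)%:E)); last first.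
  by apply/funext => w /=; rewrite -EFinM mulrA.
by rewrite (integralZl measurableT (hI c)) hA.
Qed.

Lemma mono_lim (a : nat) (phi : T -> R) (hh : R -> R)
  (mhh : measurable_fun setT (EFin \o hh)) :
  measurable_fun setT phi -> (forall w, 0 <= phi w)%R -> (forall y, 0 <= hh y)%R ->
  (fun k => \int[P]_w ((nnsfun_approx measurableT mhh k (X a w)) * phi w)%:E)
     @ \oo --> \int[P]_w (hh (X a w) * phi w)%:E.
Proof.
move=> mphi phi0 hh0.
pose g := nnsfun_approx measurableT mhh.
have hh0' : forall y, setT y -> (0 <= (EFin \o hh) y)%E by move=> y _; rewrite lee_fin.
have := @cvg_monotone_convergence _ _ _ P _ measurableT
  (fun k w => (g k (X a w) * phi w)%:E).
rewrite (_ : (fun x => limn _) = (fun w => (hh (X a w) * phi w)%:E)).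
  apply.
  - move=> k; apply/measurable_EFinP; apply: measurable_funM => //.
    exact: measurableT_comp.
  - by move=> k w _; rewrite lee_fin mulr_ge0 // fun_ge0.
  - move=> w _ m n mn; rewrite lee_fin ler_wpM2r //.
    by have /lefP := nd_nnsfun_approx measurableT mhh mn; apply.
apply/funext => w; apply: (cvg_lim (@ereal_hausdorff R)).
under eq_fun do rewrite EFinM.
rewrite EFinM; apply: cvgeZr => //.
exact: (cvg_nnsfun_approx measurableT mhh hh0' (x := X a w) I).
Qed.

Lemma indep_nonneg (s t : seq nat) (h : nat -> R -> R) (B : nat -> set R) :
  uniq (s ++ t) ->
  (forall i, measurable_fun setT (h i)) -> (forall i y, 0 <= h i y)%R ->
  (forall i, measurable (B i)) ->
  (forall i, \int[P]_w (h i (X i w))%:E \is a fin_num) ->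
  \int[P]_w ((\prod_(i <- s) h i (X i w)) * \prod_(i <- t) \1_(B i) (X i w))%:E =
  ((\prod_(i <- s) fine (\int[P]_w (h i (X i w))%:E)) *
    \prod_(i <- t) fine (P (X i @^-1` B i)))%:E.
Proof.
move=> + mh h0 + hfin.
elim: s t B => [|a s IH] t B.
  move=> ut mB; rewrite big_nil mul1r -indep_base //.
  by apply: eq_integral => w _; rewrite big_nil mul1r.
rewrite cat_cons /= => /andP[ast ust] mB.
have at' : a \notin t by move: ast; rewrite mem_cat negb_or => /andP[].
pose Rp w := (\prod_(i <- s) h i (X i w) * \prod_(i <- t) \1_(B i) (X i w))%R.
pose K := (\prod_(i <- s) fine (\int[P]_w (h i (X i w))%:E) *
    \prod_(i <- t) fine (P (X i @^-1` B i)))%R.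
have mRp : measurable_fun setT Rp.
  apply: measurable_funM; apply: measurable_prod => i _.
    by apply: measurableT_comp => //.
  by apply: measurableT_comp => //; exact: measurable_indic.
have Rp0 w : (0 <= Rp w)%R.
  by rewrite mulr_ge0 // prodr_ge0 // => i _; rewrite ?h0 // indicE.
have key A : measurable A ->
    \int[P]_w (\1_A (X a w) * Rp w)%:E = (fine (P (X a @^-1` A)) * K)%:E.
  move=> mA.
  pose B' i := if i == a then A else B i.
  have u' : uniq (s ++ a :: t).
    by rewrite -cat1s uniq_catCA cat1s /= ast.
  have mB' i : measurable (B' i) by rewrite /B'; case: ifP.
  have eqt w : (\prod_(i <- t) \1_(B' i) (X i w) = \prod_(i <- t) \1_(B i) (X i w))%R.
    rewrite big_seq_cond [RHS]big_seq_cond; apply: eq_bigr => i /andP[it _].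
    by rewrite /B' ifN //; apply: contraNneq at' => <-.
  have eqtP : (\prod_(i <- t) fine (P (X i @^-1` B' i)) =
     \prod_(i <- t) fine (P (X i @^-1` B i)))%R.
    rewrite big_seq_cond [RHS]big_seq_cond; apply: eq_bigr => i /andP[it _].
    by rewrite /B' ifN //; apply: contraNneq at' => <-.
  have := IH (a :: t) B' u' mB'.
  rewrite big_cons eqtP /B' eqxx -/(B' a) => HI.
  have -> : (fine (P (X a @^-1` A)) * K)%:E = (\prod_(i <- s) fine (\int[P]_w (h i (X i w))%:E) *
     (fine (P (X a @^-1` A)) * \prod_(i <- t) fine (P (X i @^-1` B i))))%:E.
    by congr (_%:E); rewrite /K; ring.
  rewrite -HI.
  apply: eq_integral => w _; rewrite big_cons eqt /Rp /B' eqxx.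
  by congr (_%:E); ring.
have mha : measurable_fun setT (EFin \o h a) by apply/measurable_EFinP.
pose g := nnsfun_approx measurableT mha.
pose S k := (\sum_(c <- fset_set (range (g k))) c * fine (P (X a @^-1` (g k @^-1` [set c]))))%R.
have e1 k : \int[P]_w (g k (X a w) * Rp w)%:E = (S k * K)%:E.
  rewrite (@simple_int a Rp (fun A => fine (P (X a @^-1` A)) * K)%R (g k) mRp Rp0 key).
  by rewrite /S big_distrl /=; congr (_%:E); apply: eq_bigr => c _; rewrite mulrA.
have hind A : measurable A ->
    \int[P]_w (\1_A (X a w) * cst 1%R w)%:E = (fine (P (X a @^-1` A)))%:E.
  move=> mA.
  rewrite (_ : (fun w => (\1_A (X a w) * cst 1%R w)%:E) = (fun w => (\1_(X a @^-1` A) w)%:E)); last first.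
    by apply: funext => w; rewrite /= mulr1 !indicE.
  have mXA : measurable (X a @^-1` A) by exact: measurable_funPTI.
  by rewrite integral_indic // setIT fineK //; exact: fin_num_measure.
have e2 k : \int[P]_w (g k (X a w) * cst 1%R w)%:E = (S k)%:E.
  exact: (@simple_int a (cst 1%R) (fun A => fine (P (X a @^-1` A))) (g k)
    (measurable_cst _) (fun=> ler01) hind).
have c1 := @mono_lim a (cst 1%R) (h a) mha (measurable_cst _) (fun=> ler01) (h0 a).
have c2 := @mono_lim a Rp (h a) mha mRp Rp0 (h0 a).
have c3 : (S k)%:E @[k --> \oo] --> \int[P]_w (h a (X a w) * cst 1%R w)%:E.
  by under eq_fun do rewrite -e2; exact: c1.
have {}c2 : (S k * K)%:E @[k --> \oo] --> \int[P]_w (h a (X a w) * Rp w)%:E.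
  by under eq_fun do rewrite -e1; exact: c2.
have hv : \int[P]_w (h a (X a w) * cst 1%R w)%:E = (fine (\int[P]_w (h a (X a w))%:E))%:E.
  rewrite fineK //; apply: eq_integral => w _; by rewrite /= mulr1.
rewrite hv in c3.
have c4 := cvgeZr (y := K%:E) isT c3.
under eq_fun do rewrite -EFinM in c4.
have E1 := cvg_lim (@ereal_hausdorff R) c2.
have E2 := cvg_lim (@ereal_hausdorff R) c4.
rewrite E1 in E2.
rewrite (_ : (fun w => _) = (fun w => (h a (X a w) * Rp w)%:E)); last first.
  by apply: funext => w; rewrite big_cons /Rp mulrA.
rewrite E2 -EFinM big_cons; congr (_%:E); rewrite /K; ring.
Qed.


Lemma indep_signed (s t : seq nat) (f h : nat -> R -> R) :
  uniq (s ++ t) ->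
  (forall i, measurable_fun setT (f i)) ->
  (forall i, P.-integrable setT (EFin \o (f i \o X i))) ->
  (forall i, measurable_fun setT (h i)) -> (forall i y, 0 <= h i y)%R ->
  (forall i, \int[P]_w (h i (X i w))%:E \is a fin_num) ->
  P.-integrable setT (EFin \o (fun w =>
      \prod_(i <- s) f i (X i w) * \prod_(i <- t) h i (X i w)))%R /\
  \int[P]_w (\prod_(i <- s) f i (X i w) * \prod_(i <- t) h i (X i w))%:E =
  ((\prod_(i <- s) fine (\int[P]_w (f i (X i w))%:E)) *
     \prod_(i <- t) fine (\int[P]_w (h i (X i w))%:E))%:E.
Proof.
move=> + mf intf.
elim: s t h => [|a s IH] t h.
  move=> ut mh h0 hfin.
  have := @indep_nonneg t [::] h (fun=> setT) (ltac:(by rewrite cats0)) mh h0 (fun=> measurableT) hfin.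
  rewrite !big_nil mulr1 => HN.
  have E : (fun w => (\prod_(i <- [::]) f i (X i w) * \prod_(i <- t) h i (X i w))%:E)
         = (fun w => (\prod_(i <- t) h i (X i w) * \prod_(i <- [::]) \1_setT (X i w))%:E).
    by apply: funext => w; rewrite !big_nil mul1r mulr1.
  split; last by rewrite E HN mul1r.
  have M1 : measurable_fun setT
      (fun w => \prod_(i <- [::]) f i (X i w) * \prod_(i <- t) h i (X i w))%R.
    apply: measurable_funM; apply: measurable_prod => i _;
      exact: measurableT_comp.
  have P1 : forall w,
      (0 <= \prod_(i <- [::]) f i (X i w) * \prod_(i <- t) h i (X i w))%R.
    by move=> w; rewrite big_nil mul1r prodr_ge0.
  apply: (int_fin_ge0 M1 P1).
  by rewrite E HN.
rewrite cat_cons /= => /andP[ast ust] mh h0 hfin.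
have at' : a \notin t by move: ast; rewrite mem_cat negb_or => /andP[].
have u' : uniq (s ++ a :: t) by rewrite -cat1s uniq_catCA cat1s /= ast.
have ip : P.-integrable setT (EFin \o (funrpos (f a)) \o X a).
  exact: (integrable_funrpos measurableT (intf a)).
have in_ : P.-integrable setT (EFin \o (funrneg (f a)) \o X a).
  exact: (integrable_funrneg measurableT (intf a)).
pose hp i := if i == a then (funrpos (f a)) else h i.
pose hn i := if i == a then (funrneg (f a)) else h i.
have mhp i : measurable_fun setT (hp i).
  by rewrite /hp; case: ifP => // _; exact: measurable_funrpos.
have mhn i : measurable_fun setT (hn i).
  by rewrite /hn; case: ifP => // _; exact: measurable_funrneg.
have hp0 i y : (0 <= hp i y)%R by rewrite /hp; case: ifP => // _; exact: funrpos_ge0.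
have hn0 i y : (0 <= hn i y)%R by rewrite /hn; case: ifP => // _; exact: funrneg_ge0.
have hpfin i : \int[P]_w (hp i (X i w))%:E \is a fin_num.
  rewrite /hp; case: ifP => [/eqP ->|_] //; exact: (integrable_fin_num measurableT ip).
have hnfin i : \int[P]_w (hn i (X i w))%:E \is a fin_num.
  rewrite /hn; case: ifP => [/eqP ->|_] //; exact: (integrable_fin_num measurableT in_).
have [Ip Vp] := IH (a :: t) hp u' mhp hp0 hpfin.
have [In Vn] := IH (a :: t) hn u' mhn hn0 hnfin.
have eqt (k : nat -> R -> R) (F : nat -> (R -> R) -> R) :
    (forall i, i != a -> k i = h i) ->
    (\prod_(i <- t) F i (k i) = \prod_(i <- t) F i (h i))%R.
  move=> hk; rewrite big_seq_cond [RHS]big_seq_cond; apply: eq_bigr => i /andP[it _].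
  by rewrite hk //; apply: contraNneq at' => <-.
have kp : forall i, i != a -> hp i = h i by move=> i /negbTE ia; rewrite /hp ia.
have kn : forall i, i != a -> hn i = h i by move=> i /negbTE ia; rewrite /hn ia.
have hpa : hp a = funrpos (f a) by rewrite /hp eqxx.
have hna : hn a = funrneg (f a) by rewrite /hn eqxx.
have fa y : f a y = (funrpos (f a) y - funrneg (f a) y)%R.
  by rewrite -[in LHS](funrposBneg (f a)).
set G1 := fun w => _ in Ip.
set G2 := fun w => _ in In.
have EG w : (\prod_(i <- a :: s) f i (X i w) * \prod_(i <- t) h i (X i w) = G1 w - G2 w)%R.
  rewrite /G1 /G2 !big_cons hpa hna.
  rewrite (eqt hp (fun i k => k (X i w)) kp) (eqt hn (fun i k => k (X i w)) kn) fa.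
  ring.
have Vp' := Vp; have Vn' := Vn.
rewrite big_cons hpa (eqt hp (fun i k => fine (\int[P]_w (k (X i w))%:E)) kp) in Vp'.
rewrite big_cons hna (eqt hn (fun i k => fine (\int[P]_w (k (X i w))%:E)) kn) in Vn'.
have EE : (fun w => (\prod_(i <- a :: s) f i (X i w) * \prod_(i <- t) h i (X i w))%:E) =
          (fun w => (G1 w)%:E - (G2 w)%:E).
  by apply: funext => w; rewrite EG EFinB.
have fE : fine (\int[P]_w (f a (X a w))%:E) =
   (fine (\int[P]_w (funrpos (f a) (X a w))%:E) - fine (\int[P]_w (funrneg (f a) (X a w))%:E))%R.
  rewrite -fineB; [|exact: (integrable_fin_num measurableT ip)|exact: (integrable_fin_num measurableT in_)].
  rewrite -(integralB_EFin measurableT ip in_); congr fine; apply: eq_integral => w _.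
  by rewrite -EFinB -fa.
split.
  apply: (eq_integrable measurableT _ _ _ (integrableB measurableT Ip In)) => w _.
  by rewrite /= EG EFinB.
rewrite EE (integralB_EFin measurableT Ip In) -/G1 -/G2.
rewrite /G1 /G2 Vp' Vn' -EFinB big_cons fE; congr (_%:E); ring.
Qed.

End Indep.

Section Sums.
Context d (T : measurableType d) (R : realType) (P : probability T R)
  (X : nat -> {RV P >-> R}).
Hypothesis indep : mutually_independent X.
Variable mu : nat -> R.
Hypothesis mom : forall i b, Int P (fun w => X i w ^+ b).
Hypothesis momE : forall i b, Ex P (fun w => X i w ^+ b) = mu b.
Variable c : R.

Fixpoint ee (j n : nat) : R :=
  if j is j'.+1 then \sum_(k < n.+1) ('C(n, k))%:R * ee j' (n - k) * mu k
  else c ^+ n.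

Lemma mono (s : seq nat) (b : nat -> nat) : uniq s ->
  Int P (fun w => \prod_(i <- s) X i w ^+ b i) /\
  Ex P (fun w => \prod_(i <- s) X i w ^+ b i) = \prod_(i <- s) mu (b i).
Proof.
move=> us.
have [I1 E1] := Int_cst1 P.
have h1 : forall i : nat, (\int[P]_w ((fun _ : R => 1%R) (X i w))%:E \is a fin_num)%E.
  by move=> i; rewrite (IntE I1) E1.
have := @indep_signed _ _ _ P X indep s [::] (fun i y => y ^+ b i) (fun _ _ => 1%R)
  (ltac:(by rewrite cats0)) (fun i => exprn_measurable _) (fun i => mom i (b i))
  (fun _ => measurable_cst _) (fun _ _ => ler01) h1.
move=> [I2 E2].
have EQ : (fun w => \prod_(i <- s) X i w ^+ b i * \prod_(i <- [::] : seq nat) (1 : R))%R =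
          (fun w => \prod_(i <- s) X i w ^+ b i)%R.
  by apply: funext => w; rewrite big_nil mulr1.
have EQ2 : (fun w => (\prod_(i <- s) X i w ^+ b i * \prod_(i <- [::] : seq nat) (1 : R))%:E) =
          (fun w => (\prod_(i <- s) X i w ^+ b i)%:E).
  by apply: funext => w; rewrite big_nil mulr1.
rewrite EQ in I2; rewrite EQ2 big_nil mulr1 in E2; split => //.
rewrite /Ex E2 /=; apply: eq_bigr => i _; exact: momE.
Qed.

Lemma Qlem : forall j n (s : seq nat) (b : nat -> nat), uniq s ->
  all (fun i => (j <= i)%N) s ->
  Int P (fun w => (\sum_(i < j) X i w + c) ^+ n * \prod_(i <- s) X i w ^+ b i) /\
  Ex P (fun w => (\sum_(i < j) X i w + c) ^+ n * \prod_(i <- s) X i w ^+ b i) =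
    ee j n * \prod_(i <- s) mu (b i).
Proof.
elim=> [|j IH] n s b us alls.
  have [I E] := mono b us; have [I2 E2] := Int_scale (c ^+ n) I.
  rewrite (_ : (fun w => _) = (fun w => c ^+ n * \prod_(i <- s) X i w ^+ b i)); last first.
    by apply: funext => w; rewrite big_ord0 add0r.
  by split => //; rewrite E2 E.
have js : j \notin s.
  by apply/negP => js; have := allP alls j js; rewrite ltnn.
have us' : uniq (j :: s) by rewrite /= js us.
have alls' : all (fun i => (j <= i)%N) (j :: s).
  rewrite /= leqnn /=; apply: sub_all alls => i; exact: ltnW.
pose b' (k : nat) i := if i == j then k else b i.
have eqs k w : \prod_(i <- s) X i w ^+ b' k i = \prod_(i <- s) X i w ^+ b i.
  rewrite big_seq_cond [RHS]big_seq_cond; apply: eq_bigr => i /andP[iS _].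
  by rewrite /b' ifN //; apply: contraNneq js => <-.
have term k := IH (n - k)%N (j :: s) (b' k) us' alls'.
have EQ : (fun w => (\sum_(i < j.+1) X i w + c) ^+ n * \prod_(i <- s) X i w ^+ b i) =
  (fun w => \sum_(k < n.+1) ('C(n, k)%:R * ((\sum_(i < j) X i w + c) ^+ (n - k) *
       \prod_(i <- j :: s) X i w ^+ b' k i))).
  apply: funext => w; rewrite big_ord_recr /= addrAC exprDn big_distrl /=.
  apply: eq_bigr => k _; rewrite big_cons eqs /b' eqxx -mulr_natl; ring.
rewrite EQ.
have [Is Es] := Int_sum (index_enum 'I_n.+1) (fun k => (Int_scale ('C(n, k)%:R) (term k).1).1).
split => //; rewrite Es /= big_distrl /=; apply: eq_bigr => k _.
rewrite (Int_scale _ (term k).1).2 (term k).2 big_cons /b' eqxx.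
rewrite (_ : \prod_(j0 <- s) mu (if j0 == j then (k : nat) else b j0) = \prod_(i <- s) mu (b i)).
  by rewrite !mulrA.
rewrite big_seq_cond [RHS]big_seq_cond; apply: eq_bigr => i /andP[iS _].
by rewrite ifN //; apply: contraNneq js => <-.
Qed.

End Sums.

Section Transfer.
Context (R : realType) d0 (T0 : measurableType d0) (P0 : probability T0 R)
  (Y : {RV P0 >-> R}) d (T : measurableType d) (P : probability T R)
  (Z : {RV P >-> R}).
Hypothesis hZ : forall B, measurable B -> P (Z @^-1` B) = P0 (Y @^-1` B).
Local Open Scope ereal_scope.

Lemma transfer (f : R -> R) : measurable_fun setT f -> Int P0 (f \o Y) ->
  Int P (f \o Z) /\ Ex P (f \o Z) = Ex P0 (f \o Y).
Proof.
move=> mf IY.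
have mZ : measurable_fun setT Z := measurable_funPT Z.
have mY : measurable_fun setT Y := measurable_funPT Y.
have meq : forall A, measurable A -> A `<=` setT ->
    pushforward P Z A = pushforward P0 Y A.
  by move=> A mA _; rewrite /pushforward hZ.
have mfE : measurable_fun setT (EFin \o f) by apply/measurable_EFinP.
have mafE : measurable_fun setT (fun y => `|(f y)%:E|).
  by apply: measurableT_comp => //.
have IZ : Int P (f \o Z).
  apply/integrableP; split.
    by apply/measurable_EFinP; exact: measurableT_comp.
  have := ge0_integral_pushforward mZ P measurableT mafE (fun y _ => abse_ge0 _).
  rewrite preimage_setT => <-.
  rewrite (eq_measure_integral (pushforward P0 Y)) //.
  rewrite (ge0_integral_pushforward mY P0 measurableT mafE (fun y _ => abse_ge0 _)).
  rewrite preimage_setT.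
  by move/integrableP : IY => [].
split => //.
rewrite /Ex.
have IZ' : P.-integrable (Z @^-1` setT) ((EFin \o f) \o Z) by rewrite preimage_setT.
have IY' : P0.-integrable (Y @^-1` setT) ((EFin \o f) \o Y) by rewrite preimage_setT.
have := integral_pushforward mZ mfE IZ' measurableT.
rewrite preimage_setT => <-.
rewrite (eq_measure_integral (pushforward P0 Y)) //.
rewrite (integral_pushforward mY mfE IY' measurableT).
by rewrite preimage_setT.
Qed.

End Transfer.

Section Moments.
Context (R : realType) d0 (T0 : measurableType d0) (P0 : probability T0 R)
  (Y : {RV P0 >-> R}) (r0 : R).
Hypothesis r0pos : (0 < r0)%R.
Hypothesis hmgf : forall t : R, (`|t| < r0)%R -> ('M_P0 Y t)%E \is a fin_num.

Lemma exp_bound (b : nat) (t y : R) : (0 < t)%R ->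
  (`|y ^+ b| <= (b`!)%:R / t ^+ b * (expR (t * y) + expR (- t * y)))%R.
Proof.
move=> t0.
have z0 : (0 <= t * `|y|)%R by rewrite mulr_ge0 // ltW.
have H1 : ((t * `|y|) ^+ b / (b`!)%:R <= expR (t * `|y|))%R.
  case: b => [|n].
    by rewrite expr0 fact0 divr1 (le_trans _ (expR_ge1Dx _)) // lerDl.
  by rewrite (le_trans _ (expR_ge1Dxn n z0)) // lerDr.
have H2 : (expR (t * `|y|) <= expR (t * y) + expR (- t * y))%R.
  case: (real_ge0P (num_real y)) => hy.
    by rewrite lerDl expR_ge0.
  by rewrite mulrN -mulNr lerDr expR_ge0.
have tb : (0 < t ^+ b)%R by rewrite exprn_gt0.
have fb : (0 < (b`!)%:R :> R)%R by rewrite ltr0n fact_gt0.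
rewrite normrX; move: H1; rewrite exprMn.
move=> H1.
have H3 : (`|y| ^+ b <= (b`!)%:R / t ^+ b * expR (t * `|y|))%R.
  rewrite mulrAC ler_pdivlMr //.
  by rewrite mulrC [X in _ <= X]mulrC -ler_pdivrMr.
apply: (le_trans H3); rewrite ler_wpM2l //.
by rewrite divr_ge0 // ltW.
Qed.

Lemma moments (b : nat) : Int P0 (fun w => Y w ^+ b).
Proof.
pose t := r0 / 2.
have t0 : (0 < t)%R by rewrite divr_gt0.
have h1 : (`|t| < r0)%R by rewrite gtr0_norm // ltr_pdivrMr // ltr_pMr // ltr1n.
have h2 : (`|- t| < r0)%R by rewrite normrN.
have mY : measurable_fun setT Y := measurable_funPT Y.
have Iexp (u : R) : (`|u| < r0)%R -> Int P0 (fun w => expR (u * Y w)).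
  move=> hu; have := hmgf hu; rewrite /mmt_gen_fun expectation.unlock => hf.
  have mE : measurable_fun setT (fun w => expR (u * Y w)).
    by apply: (measurableT_comp (@measurable_expR R)); apply: measurable_funM.
  have ee : (fun w => ((expR \o u \o* Y) w)%:E) = (fun w => (expR (u * Y w))%:E).
    by rewrite funeqE => w /=; rewrite mulrC.
  rewrite ee in hf.
  exact: (int_fin_ge0 mE (fun w => expR_ge0 _) hf).
have [I1 _] := Int_add (Iexp _ h1) (Iexp _ h2).
have [I2 _] := Int_scale ((b`!)%:R / t ^+ b) I1.
apply: (le_integrable measurableT _ _ I2).
  by apply/measurable_EFinP; exact: measurable_funX.
move=> w _ /=; rewrite lee_fin.
rewrite (le_trans (exp_bound b (Y w) t0)) // ler_norm //.
Qed.

End Moments.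

Unset Implicit Arguments.
Set Strict Implicit.

Theorem theorem2p3 (R : realType)
  (d0 : measure_display) (T0 : measurableType d0) (P0 : probability T0 R)
  (Y : {RV P0 >-> R})
  (d : measure_display) (T : measurableType d) (P : probability T R)
  (Ys : nat -> {RV P >-> R}) (r : nat) (r0 x y : R) :
  0 < r0 ->
  (forall t : R, `|t| < r0 -> ('M_P0 Y t)%E \is a fin_num) ->
  (forall (j : nat) (B : set R), measurable B ->
     P (Ys j @^-1` B) = P0 (Y @^-1` B)) ->
  mutually_independent Ys ->
  (0 < r)%N ->
  forall n : nat,
    prob_rBell P0 Y r x y n =
    \sum_(k < n.+1) prob_rStirling2 Ys r n k * falling x k * y ^+ k.
Proof.
move=> r0pos hmgf hdist indep rpos n.
pose mu (k : nat) := fine ('E_P0[fun w => (Y w ^+ k)%R])%E.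
have mom0 := moments r0pos hmgf.
have muE k : mu k = Ex P0 (fun w => Y w ^+ k) by rewrite /mu expectation.unlock.
have tr i b := @transfer R d0 T0 P0 Y d T P (Ys i) (hdist i) (fun y => y ^+ b)
  (exprn_measurable _) (mom0 b).
have mom : forall i b, Int P (fun w => Ys i w ^+ b) by move=> i b; exact: (tr i b).1.
have momE : forall i b, Ex P (fun w => Ys i w ^+ b) = mu b.
  by move=> i b; rewrite muE; exact: (tr i b).2.
have stir (j : nat) : fine ('E_P[fun w => ((\sum_(i < j) Ys i w + r%:R) ^+ n)%R])%E = ee mu r%:R j n.
  have [_ E] := @Qlem d T R P Ys indep mu mom momE r%:R j n [::] (fun _ => 0%N) isT isT.
  rewrite big_nil mulr1 in E; rewrite -E expectation.unlock /Ex; congr fine.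
  by apply: eq_integral => w _; rewrite big_nil mulr1.
have mu0 : mu 0%N = 1.
  rewrite /mu (_ : (fun w => Y w ^+ 0) = cst 1); last by rewrite funeqE => w; rewrite expr0.
  by rewrite expectation_cst.
rewrite /prob_rBell /mgf_series.
rewrite (@alg_main R r%:R x y mu (ee mu r%:R) n mu0) //.
apply: eq_bigr => k _; rewrite /prob_rStirling2; congr (_ * _ * _); congr (_ * _).
by apply: eq_bigr => j _; rewrite stir.
Qed.
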